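(* Let $G$ be a $K_3$-free graph and let $P,Q$ be two distinct bicliques of $G$ with $P\cap Q\neq\emptyset$. Then either $P$ and $Q$ are mutually included, or there is a biclique $R$ of $G$ that is mutually included with $P$ and mutually included with $Q$.
   Context: All graphs are finite and simple. A biclique of a graph $G$ is a set $P\subseteq V(G)$ such that the induced subgraph $G[P]$ is a complete bipartite graph with both parts nonempty, and $P$ is inclusion-maximal with this property. Since $G[P]$ is connected, its bipartition into two nonempty independent sets $X,Y$ (every vertex of $X$ adjacent to every vertex of $Y$) is unique; we write $P=XY$ to mean $P=X\cup Y$ with $X,Y$ these two parts, called the sides of $P$. Two bicliques $P,Q$ of $G$ are mutually included if their sides can be named $P=X_PY_P$, $Q=X_QY_Q$ so that $X_Q\subsetneq X_P$ and $Y_P\subsetneq Y_Q$. *)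

(* Defs.v *)
From mathcomp Require Import all_boot.
Set Implicit Arguments. Unset Strict Implicit. Unset Printing Implicit Defensive.

Definition simple_graph (T : finType) (e : rel T) : Prop :=
  symmetric e /\ irreflexive e.

Definition K3_free (T : finType) (e : rel T) : Prop :=
  forall x y z : T, ~ [&& e x y, e y z & e x z].

Definition independent (T : finType) (e : rel T) (X : {set T}) : Prop :=
  forall x y, x \in X -> y \in X -> ~~ e x y.

(* G[X :|: Y] is complete bipartite with nonempty parts X, Y
   (X, Y independent, every vertex of X adjacent to every vertex of Y;
   disjointness follows from irreflexivity). *)
Definition complete_bip (T : finType) (e : rel T) (X Y : {set T}) : Prop :=
  X != set0 /\ Y != set0 /\ independent e X /\ independent e Y /\
  (forall x y, x \in X -> y \in Y -> e x y).

Definition induces_cb (T : finType) (e : rel T) (P : {set T}) : Prop :=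
  exists X Y : {set T}, P = X :|: Y /\ complete_bip e X Y.

Definition biclique (T : finType) (e : rel T) (P : {set T}) : Prop :=
  induces_cb e P /\
  (forall P' : {set T}, P \subset P' -> induces_cb e P' -> P' = P).

Definition mutually_included (T : finType) (e : rel T) (P Q : {set T}) : Prop :=
  exists XP YP XQ YQ : {set T},
    [/\ P = XP :|: YP, complete_bip e XP YP,
        Q = XQ :|: YQ, complete_bip e XQ YQ &
        XQ \proper XP /\ YP \proper YQ].

(* Main.v *)
Require Import Defs.
From mathcomp Require Import all_boot.
From mathcomp Require Import zify.
From Stdlib Require Import Classical.

Section S.
Variables (T : finType) (e : rel T).
Hypothesis sg : simple_graph e.
Hypothesis k3 : K3_free e.

Lemma esymm x y : e x y = e y x.
Proof. by case: sg => s _; rewrite s. Qed.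

Lemma eirr x : e x x = false.
Proof. by case: sg => _ i; rewrite i. Qed.

Lemma cb_sym X Y : complete_bip e X Y -> complete_bip e Y X.
Proof.
move=> [h1 [h2 [h3 [h4 h5]]]]; do 4 (split => //).
by move=> x y hx hy; rewrite esymm; apply: h5.
Qed.

Lemma notri x y z : e x y -> e x z -> ~~ e y z.
Proof.
move=> h1 h2; apply/negP => h3; apply: (k3 x y z).
by rewrite h1 h3 h2.
Qed.

Arguments cb_sym {X Y}.
Arguments notri {x y z}.

Lemma absorb P XP YP x : biclique e P -> P = XP :|: YP -> complete_bip e XP YP ->
  (forall y, y \in YP -> e x y) -> x \in XP.
Proof.
move=> [_ hmax] hP [h1 [h2 [h3 [h4 h5]]]] hx.
have [y0 hy0] : exists y, y \in YP by apply/set0Pn.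
have cb : induces_cb e ((x |: XP) :|: YP).
  exists (x |: XP), YP; split => //.
  split; [by apply/set0Pn; exists x; rewrite setU11|].
  split => //; split; [|split => //].
    move=> a b; rewrite !in_setU1 => /orP [/eqP -> | ha] /orP [/eqP -> | hb].
    - by rewrite eirr.
    - have := h5 _ _ hb hy0; rewrite esymm => hb'.
      have := hx y0 hy0; rewrite esymm => hx'.
      by apply: notri hx' hb'.
    - have := h5 _ _ ha hy0; rewrite esymm => ha'.
      have := hx y0 hy0; rewrite esymm => hx'.
      by rewrite esymm; apply: notri hx' ha'.
    - by apply: h3.
  by move=> a b; rewrite in_setU1 => /orP [/eqP -> | ha] hb; [apply: hx | apply: h5].
have hsub : P \subset (x |: XP) :|: YP.
  by rewrite hP; apply/subsetP => z; rewrite !in_setU in_set1 => /orP [->|->]; rewrite ?orbT.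
have := hmax _ hsub cb => /setP /(_ x).
rewrite hP !in_setU in_set1 eqxx /= => /esym /orP [//|hy].
by have := hx _ hy; rewrite eirr.
Qed.

Arguments absorb {P XP YP x}.

Lemma cb_disj (X Y : {set T}) x : complete_bip e X Y -> x \in X -> x \in Y -> False.
Proof. by move=> [_ [_ [_ [_ h]]]] hx hy; have := h _ _ hx hy; rewrite eirr. Qed.

Lemma sides1 (XR YR A B : {set T}) a0 b0 : complete_bip e XR YR ->
  A \subset XR :|: YR -> B \subset XR :|: YR -> a0 \in A -> b0 \in B ->
  (forall a b, a \in A -> b \in B -> e a b) -> a0 \in XR ->
  A \subset XR /\ B \subset YR.
Proof.
move=> [_ [_ [h3 [h4 _]]]] hA hB ha0 hb0 hAB hx.
have hBY : B \subset YR.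
  apply/subsetP => b hb; have := subsetP hB _ hb; rewrite in_setU => /orP [hbx|//].
  by have := h3 _ _ hx hbx; rewrite hAB.
split => //; apply/subsetP => a ha; have := subsetP hA _ ha; rewrite in_setU => /orP [//|hay].
by have := h4 _ _ hay (subsetP hBY _ hb0); rewrite hAB.
Qed.

Lemma sides (XR YR A B : {set T}) a0 b0 : complete_bip e XR YR ->
  A \subset XR :|: YR -> B \subset XR :|: YR -> a0 \in A -> b0 \in B ->
  (forall a b, a \in A -> b \in B -> e a b) ->
  (A \subset XR /\ B \subset YR) \/ (A \subset YR /\ B \subset XR).
Proof.
move=> cb hA hB ha0 hb0 hAB.
have := subsetP hA _ ha0; rewrite in_setU => /orP [hx|hy].
  by left; apply: (@sides1 XR YR A B a0 b0 cb hA hB ha0 hb0 hAB hx).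
right; have hA' : A \subset YR :|: XR by rewrite setUC.
 have hB' : B \subset YR :|: XR by rewrite setUC.
 exact: (@sides1 YR XR A B a0 b0 (cb_sym cb) hA' hB' ha0 hb0 hAB hy).
Qed.

Arguments sides {XR YR A B a0 b0}.
Arguments cb_disj {X Y x}.

Lemma ext_step (S : {set T}) : induces_cb e S -> ~ biclique e S ->
  exists P' : {set T}, S \proper P' /\ induces_cb e P'.
Proof.
move=> hS hb.
have [P' [hsub [hcb hne]]] : exists P' : {set T}, S \subset P' /\ induces_cb e P' /\ P' <> S.
  apply: NNPP => hno; apply: hb; split => // P' h1 h2.
  apply: NNPP => h3; apply: hno; exists P'; split => //.
exists P'; split => //; rewrite properEneq hsub andbT eq_sym; exact/eqP.
Qed.

Lemma extend n (S : {set T}) : #|T| <= #|S| + n -> induces_cb e S ->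
  exists R, biclique e R /\ S \subset R.
Proof.
elim: n S => [|n IH] S hn hS; (case: (classic (biclique e S)) => hb;
  [by exists S; split => // | ]); have [P' [hpr hcb]] := ext_step _ hS hb.
- have := proper_card hpr; have := max_card P'; lia.
- have [R [hR hPR]] := IH P' ltac:(have := proper_card hpr; lia) hcb.
  by exists R; split => //; apply: subset_trans hPR; apply: proper_sub.
Qed.

Lemma mi_sym P Q : mutually_included e P Q -> mutually_included e Q P.
Proof.
move=> [XP [YP [XQ [YQ [h1 h2 h3 h4 [h5 h6]]]]]].
exists YQ, XQ, YP, XP; split => //; rewrite 1?setUC //; exact: cb_sym.
Qed.

Lemma mi_of (A XA YA B XB YB : {set T}) : biclique e A -> biclique e B ->
  A = XA :|: YA -> complete_bip e XA YA -> B = XB :|: YB -> complete_bip e XB YB ->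
  A <> B -> XA \subset XB -> YB \subset YA -> mutually_included e B A.
Proof.
move=> [cA mA] [cB mB] hA ca hB cbb hne h1 h2.
exists XB, YB, XA, YA; split => //; split; rewrite properEneq ?h1 ?h2 andbT; apply/eqP => heq.
- apply: hne; apply: mB => //; rewrite hA hB heq; apply: setUS => //.
- apply: hne; symmetry; apply: mA => //; rewrite hA hB heq; apply: setSU => //.
Qed.

Lemma buildR (P Q XP YP XQ YQ : {set T}) v : biclique e P -> biclique e Q ->
  P = XP :|: YP -> complete_bip e XP YP -> Q = XQ :|: YQ -> complete_bip e XQ YQ ->
  v \in XP -> v \in XQ ->
  exists R XR YR : {set T}, [/\ biclique e R, R = XR :|: YR /\ complete_bip e XR YR,
    XR \subset XP /\ XR \subset XQ, XP :&: XQ \subset XR & YP \subset YR /\ YQ \subset YR].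
Proof.
move=> bP bQ hP cP hQ cQ hvP hvQ.
set A := XP :&: XQ; set B := YP :|: YQ.
have [y0 hy0] : exists y, y \in YP by case: cP => _ [/set0Pn h _].
have hvA : v \in A by rewrite inE hvP hvQ.
have hAB : forall a b, a \in A -> b \in B -> e a b.
  move=> a b; rewrite !inE => /andP [ha1 ha2] /orP [hb|hb].
  - by case: cP => _ [_ [_ [_ h]]]; apply: h.
  - by case: cQ => _ [_ [_ [_ h]]]; apply: h.
have cAB : complete_bip e A B.
  split; first by apply/set0Pn; exists v.
  split; first by apply/set0Pn; exists y0; rewrite inE hy0.
  split; first by move=> a b; rewrite !inE => /andP [ha _] /andP [hb _];
     case: cP => _ [_ [h _]]; apply: h.
  split => //.
  by move=> a b ha hb; apply: (notri (hAB _ _ hvA ha) (hAB _ _ hvA hb)).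
have [R [bR hsub]] := @extend #|T| (A :|: B) (leq_addl _ _)
  (ex_intro _ A (ex_intro _ B (conj erefl cAB))).
have hsA : A \subset R by apply: subset_trans hsub; apply: subsetUl.
have hsB : B \subset R by apply: subset_trans hsub; apply: subsetUr.
have fin : forall XR YR, R = XR :|: YR -> complete_bip e XR YR -> A \subset XR -> B \subset YR ->
   exists R XR YR : {set T}, [/\ biclique e R, R = XR :|: YR /\ complete_bip e XR YR,
    XR \subset XP /\ XR \subset XQ, XP :&: XQ \subset XR & YP \subset YR /\ YQ \subset YR].
  move=> XR YR hR cR hA hB; exists R, XR, YR; split => //.
  - split.
    apply/subsetP => x hx.
    apply: (absorb bP hP cP) => y hy; case: cR => _ [_ [_ [_ h]]]; apply: h => //.
    by apply: (subsetP hB); rewrite inE hy.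
    apply/subsetP => x hx.
    apply: (absorb bQ hQ cQ) => y hy; case: cR => _ [_ [_ [_ h]]]; apply: h => //.
    by apply: (subsetP hB); rewrite inE hy orbT.
  - split; apply: subset_trans hB; [apply: subsetUl | apply: subsetUr].
have [XR [YR [hR cR]]] := bR.1.
have hb0 : y0 \in B by rewrite inE hy0.
rewrite hR in hsA hsB.
case: (sides cR hsA hsB hvA hb0 hAB) => [[h1 h2]|[h1 h2]].
  exact: fin hR cR h1 h2.
by apply: fin (cb_sym cR) h1 h2; rewrite hR setUC.
Qed.

Arguments mi_sym {P Q}.
Arguments mi_of {A XA YA B XB YB}.
Arguments buildR {P Q XP YP XQ YQ v}.

Lemma caseA (P Q XP YP XQ YQ : {set T}) v : biclique e P -> biclique e Q ->
  P = XP :|: YP -> complete_bip e XP YP -> Q = XQ :|: YQ -> complete_bip e XQ YQ ->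
  v \in XP -> v \in XQ -> P <> Q -> XP \subset XQ -> mutually_included e P Q.
Proof.
move=> bP bQ hP cP hQ cQ hvP hvQ hne hPQ.
have [R [XR [YR [bR [hR cR] [h1 h2] hA [hYP hYQ]]]]] := buildR bP bQ hP cP hQ cQ hvP hvQ.
have hXPR : XP \subset XR by move: hA; rewrite (setIidPl hPQ).
have hsub : P \subset R by rewrite hP hR; apply: setUSS.
have hRP := bP.2 R hsub bR.1.
have hYQP : YQ \subset YP.
  apply/subsetP => y hy.
  have : y \in R by rewrite hR in_setU (subsetP hYQ _ hy) orbT.
  rewrite hRP hP in_setU => /orP [hx|//].
  by case: (cb_disj cR (subsetP hXPR _ hx) (subsetP hYQ _ hy)).
apply: mi_sym; exact: (mi_of bP bQ hP cP hQ cQ hne hPQ hYQP).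
Qed.

Lemma caseB (P XP YP R XR YR : {set T}) : biclique e P -> biclique e R ->
  P = XP :|: YP -> complete_bip e XP YP -> R = XR :|: YR -> complete_bip e XR YR ->
  XR \subset XP -> YP \subset YR -> ~~ (XP \subset XR) -> mutually_included e R P.
Proof.
move=> bP bR hP cP hR cR h1 h2 hn.
have hP' : P = YP :|: XP by rewrite hP setUC.
have hR' : R = YR :|: XR by rewrite hR setUC.
apply: (mi_of bP bR hP' (cb_sym cP) hR' (cb_sym cR)) => //.
move=> hPR; apply: (negP hn); apply/subsetP => x hx.
have : x \in R by rewrite -hPR hP in_setU hx.
rewrite hR in_setU => /orP [//|hy].
have [y0 hy0] : exists y, y \in YP by case: cP => _ [/set0Pn h _].
have hxy : e x y0 by case: cP => _ [_ [_ [_ h]]]; apply: h.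
by case: cR => _ [_ [_ [h _]]]; have := h _ _ hy (subsetP h2 _ hy0); rewrite hxy.
Qed.
End S.
Arguments buildR {T e} sg k3 {P Q XP YP XQ YQ v}.
Arguments caseA {T e} sg k3 {P Q XP YP XQ YQ v}.
Arguments caseB {T e} sg {P XP YP R XR YR}.
Arguments cb_sym {T e} sg {X Y}.
Arguments mi_sym {T e} sg {P Q}.


Theorem corollary1 (T : finType) (e : rel T) (P Q : {set T}) :
  simple_graph e -> K3_free e ->
  biclique e P -> biclique e Q -> P != Q -> P :&: Q != set0 ->
  mutually_included e P Q \/
  exists R : {set T}, [/\ biclique e R, mutually_included e R P & mutually_included e R Q].
Proof.
move=> sg k3 bP bQ hne /set0Pn [v]; rewrite inE => /andP [hvP0 hvQ0].
have hne' : P <> Q by move=> h; rewrite h eqxx in hne.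
have core : forall XP YP XQ YQ : {set T}, P = XP :|: YP -> complete_bip e XP YP ->
    Q = XQ :|: YQ -> complete_bip e XQ YQ -> v \in XP -> v \in XQ ->
    mutually_included e P Q \/
    exists R : {set T}, [/\ biclique e R, mutually_included e R P & mutually_included e R Q].
  move=> XP YP XQ YQ hP cP hQ cQ hvP hvQ.
  have [R [XR [YR [bR [hR cR] [h1 h2] hA [hYP hYQ]]]]] := buildR sg k3 bP bQ hP cP hQ cQ hvP hvQ.
  case hPQ : (XP \subset XQ).
    by left; apply: (caseA sg k3 bP bQ hP cP hQ cQ hvP hvQ hne' hPQ).
  case hQP : (XQ \subset XP).
    left; apply: (mi_sym sg).
    exact: (caseA sg k3 bQ bP hQ cQ hP cP hvQ hvP (fun h => hne' (esym h)) hQP).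
  right; exists R; split => //.
  - apply: (caseB sg bP bR hP cP hR cR h1 hYP).
    by apply/negP => hs; rewrite (subset_trans hs h2) in hPQ.
  - apply: (caseB sg bQ bR hQ cQ hR cR h2 hYQ).
    by apply/negP => hs; rewrite (subset_trans hs h1) in hQP.
have [XP [YP [hP cP]]] := bP.1.
have [XQ [YQ [hQ cQ]]] := bQ.1.
have hP' : P = YP :|: XP by rewrite hP setUC.
have hQ' : Q = YQ :|: XQ by rewrite hQ setUC.
have cP' := cb_sym sg cP.
have cQ' := cb_sym sg cQ.
move: hvP0 hvQ0; rewrite {1}hP {1}hQ !in_setU => /orP [hp|hp] /orP [hq|hq].
- exact: core hP cP hQ cQ hp hq.
- exact: core hP cP hQ' cQ' hp hq.
- exact: core hP' cP' hQ cQ hp hq.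
- exact: core hP' cP' hQ' cQ' hp hq.
Qed.
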